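(* Let $q\in(0,1)$ and let $W\in\{0,1\}^{I\times I}$ have zero diagonal and satisfy $W\mathbf{1}=W^*\mathbf{1}$; let $d_{\max}=\max_{j\in I}\sum_{i\in I}W_{ij}$. Consider the Broadcast Gossip Algorithm: at each time $t$, independently of the past, a node $j$ is drawn uniformly from $I$; then $x_i(t+1)=(1-q)x_i(t)+qx_j(t)$ for every $i$ with $W_{ij}=1$, and $x_i(t+1)=x_i(t)$ otherwise. Then for every $t\ge0$, $$\mathbb{E}[(\bar x(t)-\bar x(0))^2]\le\frac{q\,d_{\max}}{q\,d_{\max}+N(1-q)}V(x(0)).$$
   Context: $I$ is a finite set of $N$ nodes, $x(0)\in\mathbb{R}^I$ deterministic. $\mathbf{1}$ is the all-ones vector, $W^*$ the transpose. For $y\in\mathbb{R}^I$, $\bar y=\frac1N\sum_i y_i$ and $V(y)=\frac1N\sum_i(y_i-\bar y)^2$. *)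

(* Defs.v *)
(* the statement is purely algebraic once the expectation
   over the i.i.d. uniform node choices is written as a finite average. *)
From HB Require Import structures.
From mathcomp Require Import all_boot all_order all_algebra.
Set Implicit Arguments. Unset Strict Implicit. Unset Printing Implicit Defensive.
Import Order.TTheory GRing.Theory Num.Theory.
Local Open Scope ring_scope.

Section BGA.
Variables (R : realFieldType) (I : finType).

Definition avg (y : I -> R) : R := (\sum_i y i) / #|I|%:R.

Definition Var (y : I -> R) : R := (\sum_i (y i - avg y) ^+ 2) / #|I|%:R.

Definition bga_step (q : R) (W : I -> I -> bool) (x : I -> R) (j : I) : I -> R :=
  fun i => if W i j then (1 - q) * x i + q * x j else x i.

Definition bga_run (q : R) (W : I -> I -> bool) (x0 : I -> R) (s : seq I) : I -> R :=
  foldl (bga_step q W) x0 s.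

(* Expectation of f(x(t)) when the t broadcasting nodes are drawn independently
   and uniformly from I: average over all t-tuples of nodes. *)
Definition bga_expect (q : R) (W : I -> I -> bool) (x0 : I -> R) (t : nat)
  (f : (I -> R) -> R) : R :=
  (\sum_(s : t.-tuple I) f (bga_run q W x0 s)) / (#|I| ^ t)%:R.

Definition dmax (W : I -> I -> bool) : nat := \max_j \sum_i (W i j : nat).

End BGA.

(* Main.v *)
Require Import Defs.
From HB Require Import structures.
From mathcomp Require Import all_boot all_order all_algebra.
From mathcomp Require Import ring lra.
Import Order.TTheory GRing.Theory Num.Theory.
Local Open Scope ring_scope.

Lemma balance (R : realFieldType) (I : finType) (W : I -> I -> bool) (f : I -> R) :
  (forall i, (\sum_j (W i j : nat) = \sum_j (W j i : nat))%N) ->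
  \sum_j \sum_i ((W i j : nat)%:R * (f j - f i)) = 0 :> R.
Proof.
move=> hb.
have -> : \sum_j \sum_i ((W i j : nat)%:R * (f j - f i)) =
   \sum_j f j * \sum_i (W i j : nat)%:R - \sum_j \sum_i (W i j : nat)%:R * f i :> R.
  rewrite -sumrB; apply eq_bigr => j _; rewrite mulr_sumr -sumrB.
  by apply eq_bigr => i _; rewrite mulrBr mulrC.
rewrite exchange_big /=.
rewrite [X in _ - X](eq_bigr (fun i => f i * \sum_j (W i j : nat)%:R)); last first.
  by move=> i _; rewrite mulr_sumr; apply eq_bigr => j _; rewrite mulrC.
apply/eqP; rewrite subr_eq0; apply/eqP; apply eq_bigr => i _.
by rewrite -!natr_sum hb.
Qed.

Lemma cs (R : realFieldType) (I : finType) (w v : I -> R) :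
  (forall i, 0 <= w i) ->
  (\sum_i w i * v i) ^+ 2 <= (\sum_i w i) * (\sum_i w i * v i ^+ 2).
Proof.
move=> hw.
have h0 : 0 <= \sum_i \sum_k w i * w k * (v i - v k) ^+ 2.
  apply: sumr_ge0 => i _; apply: sumr_ge0 => k _.
  by rewrite mulr_ge0 ?sqr_ge0 // mulr_ge0.
have e : \sum_i \sum_k w i * w k * (v i - v k) ^+ 2 =
    \sum_i \sum_k (w i * v i ^+ 2) * w k + \sum_i \sum_k w i * (w k * v k ^+ 2)
    - 2 * \sum_i \sum_k (w i * v i) * (w k * v k).
  rewrite -big_split mulr_sumr -sumrB /=; apply eq_bigr => i _.
  rewrite -big_split mulr_sumr -sumrB /=; apply eq_bigr => k _; ring.
have p1 : \sum_i \sum_k (w i * v i ^+ 2) * w k = (\sum_i w i) * (\sum_i w i * v i ^+ 2).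
  by rewrite mulrC mulr_suml; apply eq_bigr => i _; rewrite mulr_sumr.
have p2 : \sum_i \sum_k w i * (w k * v k ^+ 2) = (\sum_i w i) * (\sum_i w i * v i ^+ 2).
  by rewrite mulr_suml; apply eq_bigr => i _; rewrite mulr_sumr.
have p3 : \sum_i \sum_k (w i * v i) * (w k * v k) = (\sum_i w i * v i) ^+ 2.
  by rewrite expr2 mulr_suml; apply eq_bigr => i _; rewrite mulr_sumr.
rewrite e p1 p2 p3 in h0.
lra.
Qed.

Lemma sum_step_sq (R : realFieldType) (I : finType) (q : R) (W : I -> I -> bool)
  (x : I -> R) (a : R) (j : I) :
  \sum_i (bga_step q W x j i - a) ^+ 2 = \sum_i (x i - a) ^+ 2 +
   \sum_i (W i j : nat)%:R * (q * ((x j - a) ^+ 2 - (x i - a) ^+ 2) - q * (1 - q) * (x j - x i) ^+ 2).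
Proof.
rewrite -big_split; apply eq_bigr => i _ /=; rewrite /bga_step.
case: (W i j) => /=; ring.
Qed.

Lemma sum_step (R : realFieldType) (I : finType) (q : R) (W : I -> I -> bool)
  (x : I -> R) (j : I) :
  \sum_i bga_step q W x j i = \sum_i x i + q * \sum_i (W i j : nat)%:R * (x j - x i).
Proof.
rewrite mulr_sumr -big_split; apply eq_bigr => i _ /=; rewrite /bga_step.
case: (W i j) => /=; ring.
Qed.

Lemma var_id (R : realFieldType) (I : finType) (y : I -> R) (a : R) :
  (0 < #|I|)%N ->
  Var y = (\sum_i (y i - a) ^+ 2) / #|I|%:R - (avg y - a) ^+ 2.
Proof.
move=> hN.
have hN' : (#|I|%:R : R) != 0 by rewrite pnatr_eq0 -lt0n.
rewrite /Var.
set m := avg y.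
have hs : \sum_i y i = m * #|I|%:R by rewrite /m /avg mulfVK.
clearbody m.
have e : \sum_i (y i - m) ^+ 2 = \sum_i (y i - a) ^+ 2 - 2 * (m - a) * \sum_i (y i - a)
   + \sum_(i : I) (m - a) ^+ 2.
  rewrite (eq_bigr (fun i => (y i - a) ^+ 2 - 2 * (m - a) * (y i - a) + (m - a) ^+ 2));
    last by move=> i _; ring.
  by rewrite big_split sumrB mulr_sumr.
rewrite e sumrB hs !sumr_const.
field. all: try exact hN'.
Qed.

Lemma tuple_sum (R : realFieldType) (I : finType) (t : nat) (F : t.+1.-tuple I -> R) :
  \sum_(s : t.+1.-tuple I) F s = \sum_j \sum_(s : t.-tuple I) F [tuple of j :: s].
Proof.
rewrite pair_bigA /=.
rewrite (reindex (fun p : I * t.-tuple I => [tuple of p.1 :: p.2])) //=.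
exists (fun s : t.+1.-tuple I => (thead s, [tuple of behead s])).
  move=> [j s] _ /=; rewrite theadE; congr pair; exact: val_inj.
move=> s _; apply/val_inj => /=.
by case: s => [[|j s] //= _].
Qed.

Definition Psi {R : realFieldType} {I : finType} (c a : R) (x : I -> R) : R :=
  (1 - c) * (avg x - a) ^+ 2 + c / #|I|%:R * \sum_i (x i - a) ^+ 2.

Lemma step_ineq (R : realFieldType) (I : finType) (q : R) (W : I -> I -> bool)
  (a : R) (x : I -> R) :
  (0 < #|I|)%N -> 0 < q -> q < 1 ->
  (forall i, (\sum_j (W i j : nat) = \sum_j (W j i : nat))%N) ->
  (\sum_j Psi (q * (dmax W)%:R / (q * (dmax W)%:R + #|I|%:R * (1 - q))) a
       (bga_step q W x j)) / #|I|%:R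
  <= Psi (q * (dmax W)%:R / (q * (dmax W)%:R + #|I|%:R * (1 - q))) a x.
Proof.
move=> hN hq0 hq1 hb.
set N : R := #|I|%:R.
set D : R := (dmax W)%:R.
set c := q * D / (q * D + N * (1 - q)).
have N0 : 0 < N by rewrite /N ltr0n.
have D0 : 0 <= D by rewrite /D ler0n.
have den0 : 0 < q * D + N * (1 - q).
  have : 0 <= q * D by rewrite mulr_ge0 // ltW.
  have : 0 < N * (1 - q) by rewrite mulr_gt0 // subr_gt0.
  lra.
have c1 : 0 <= 1 - c.
  have : c <= 1.
    rewrite /c ler_pdivrMr // mul1r.
    have : 0 < N * (1 - q) by rewrite mulr_gt0 // subr_gt0.
    lra.
  lra.
have key : (1 - c) * (q / N) ^+ 2 * D = c * q * (1 - q) / N.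
  rewrite /c; field; rewrite ?gt_eqF //; lra.
set e := fun j => \sum_i (W i j : nat)%:R * (x j - x i).
set Q := \sum_j \sum_i (W i j : nat)%:R * (x j - x i) ^+ 2.
have Q0 : 0 <= Q.
  by apply: sumr_ge0 => j _; apply: sumr_ge0 => i _; rewrite mulr_ge0 ?ler0n ?sqr_ge0.
have hA : forall j, avg (bga_step q W x j) - a = (avg x - a) + q / N * e j.
  move=> j; rewrite /avg sum_step -/N /e; field; rewrite gt_eqF //.
have hE : \sum_j e j = 0 by rewrite /e balance.
have hE2 : \sum_j e j ^+ 2 <= D * Q.
  rewrite /Q mulr_sumr; apply: ler_sum => j _.
  have := @cs _ _ (fun i => (W i j : nat)%:R) (fun i => x j - x i) (fun i => ler0n _ _).
  move=> /= h; apply: le_trans h _.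
  apply: ler_wpM2r.
    by apply: sumr_ge0 => i _; rewrite mulr_ge0 ?ler0n ?sqr_ge0.
  rewrite -natr_sum ler_nat /D.
  rewrite /dmax; exact: (@leq_bigmax _ (fun j => (\sum_i (W i j : nat))%N) j).
have hS : \sum_j \sum_i (bga_step q W x j i - a) ^+ 2 = N * \sum_i (x i - a) ^+ 2 - q * (1 - q) * Q.
  under eq_bigr => j _ do rewrite sum_step_sq.
  rewrite big_split sumr_const -/N.
  have -> : \sum_j \sum_i (W i j : nat)%:R * (q * ((x j - a) ^+ 2 - (x i - a) ^+ 2) - q * (1 - q) * (x j - x i) ^+ 2)
     = q * (\sum_j \sum_i (W i j : nat)%:R * ((fun k => (x k - a) ^+ 2) j - (fun k => (x k - a) ^+ 2) i)) - q * (1 - q) * Q.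
    rewrite /Q !mulr_sumr -sumrB; apply eq_bigr => j _.
    rewrite !mulr_sumr -sumrB; apply eq_bigr => i _ /=; ring.
  rewrite balance // mulr0 sub0r.
  by rewrite -mulr_natl.
have hsA : \sum_j (avg (bga_step q W x j) - a) ^+ 2
    = N * (avg x - a) ^+ 2 + (q / N) ^+ 2 * \sum_j e j ^+ 2.
  under eq_bigr => j _ do rewrite hA.
  rewrite (eq_bigr (fun j => (avg x - a) ^+ 2 + 2 * (avg x - a) * (q / N) * e j
      + (q / N) ^+ 2 * e j ^+ 2)); last by move=> j _; ring.
  rewrite !big_split /= -!mulr_sumr hE mulr0 addr0 sumr_const.
  by rewrite -mulr_natr; ring.
have hP : \sum_j Psi c a (bga_step q W x j) =
   (1 - c) * \sum_j (avg (bga_step q W x j) - a) ^+ 2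
   + c / N * \sum_j \sum_i (bga_step q W x j i - a) ^+ 2.
  by rewrite /Psi big_split /= -!mulr_sumr.
rewrite hP hsA hS /Psi -/N.
set M := avg x - a.
set S := \sum_i (x i - a) ^+ 2.
set E2 := \sum_j e j ^+ 2.
have -> : ((1 - c) * (N * M ^+ 2 + (q / N) ^+ 2 * E2) +
    c / N * (N * S - q * (1 - q) * Q)) / N =
    ((1 - c) * M ^+ 2 + c / N * S) +
    ((1 - c) * (q / N) ^+ 2 * E2 - c * q * (1 - q) / N * Q) / N.
  by field; rewrite gt_eqF.
rewrite gerDl pmulr_lle0 ?invr_gt0 // subr_le0 -key -mulrA.
have k0 : 0 <= (q / N) ^+ 2 by rewrite sqr_ge0.
set k := (q / N) ^+ 2.
apply: (@le_trans _ _ ((1 - c) * (k * (D * Q)))); last by rewrite !mulrA.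
by apply: ler_wpM2l => //; apply: ler_wpM2l.
Qed.

Lemma expect_S (R : realFieldType) (I : finType) (q : R) (W : I -> I -> bool)
  (x : I -> R) (t : nat) (f : (I -> R) -> R) :
  (0 < #|I|)%N ->
  bga_expect q W x t.+1 f = (\sum_j bga_expect q W (bga_step q W x j) t f) / #|I|%:R.
Proof.
move=> hN.
have hN' : (#|I|%:R : R) != 0 by rewrite pnatr_eq0 -lt0n.
have hT : ((#|I| ^ t)%:R : R) != 0 by rewrite pnatr_eq0 -lt0n expn_gt0 hN.
rewrite /bga_expect tuple_sum -mulr_suml expnS natrM.
rewrite invfM mulrA mulrAC; congr (_ * _ * _).
Qed.

Lemma expect_le (R : realFieldType) (I : finType) (q : R) (W : I -> I -> bool)
  (x : I -> R) (t : nat) (f g : (I -> R) -> R) :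
  (forall y, f y <= g y) -> bga_expect q W x t f <= bga_expect q W x t g.
Proof.
move=> hfg; rewrite /bga_expect; apply: ler_wpM2r; first by rewrite invr_ge0 ler0n.
by apply: ler_sum => s _.
Qed.

Theorem mainTheorem11 (R : realFieldType) (I : finType) (q : R)
  (W : I -> I -> bool) (x0 : I -> R) :
  (0 < #|I|)%N ->
  0 < q -> q < 1 ->
  (forall i, W i i = false) ->
  (forall i, (\sum_j (W i j : nat) = \sum_j (W j i : nat))%N) ->
  forall t : nat,
    bga_expect q W x0 t (fun x => (avg x - avg x0) ^+ 2)
    <= (q * (dmax W)%:R) / (q * (dmax W)%:R + #|I|%:R * (1 - q)) * Var x0.
Proof.
move=> hN hq0 hq1 _ hb t.
set c := q * (dmax W)%:R / (q * (dmax W)%:R + #|I|%:R * (1 - q)).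
set a := avg x0.
have c0 : 0 <= c.
  have h1 : 0 <= q * (dmax W)%:R by rewrite mulr_ge0 ?ler0n ?ltW.
  have h2 : 0 <= (#|I|%:R : R) * (1 - q) by rewrite mulr_ge0 ?ler0n // subr_ge0 ltW.
  rewrite /c divr_ge0 //; lra.
have NP : (0 : R) < #|I|%:R by rewrite ltr0n.
have hPsi : forall y : I -> R, Psi c a y = (avg y - a) ^+ 2 + c * Var y.
  move=> y; rewrite /Psi (@var_id _ _ y a hN); rewrite mulrBr mulrA; ring.
apply: le_trans (_ : bga_expect q W x0 t (Psi c a) <= _).
  apply: expect_le => y; rewrite hPsi lerDl mulr_ge0 //.
  by rewrite /Var divr_ge0 ?ler0n // sumr_ge0 // => i _; rewrite sqr_ge0.
have -> : c * Var x0 = Psi c a x0 by rewrite hPsi /a subrr expr0n /= add0r.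
clearbody a.
elim: t x0 => [|t IH] x.
  rewrite /bga_expect expn0 divr1 (big_pred1 (nil_tuple I)) // => s.
  by apply/esym/eqP; apply: tuple0.
rewrite expect_S //.
have h := @step_ineq _ _ q W a x hN hq0 hq1 hb; rewrite -/c in h. apply: le_trans h.
apply: ler_wpM2r; first by rewrite invr_ge0 ltW.
by apply: ler_sum => j _; apply: IH.
Qed.
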